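(* Let $S\subset\mathbb C^3_{x,y,z}$ be the smooth surface $x+y+xyz=1$, and let $L_1=\{x=0\}$, $L_2=\{yz+1=0\}$, $L_3=\{y=0\}$, $L_4=\{xz+1=0\}$, $L_5=\{z=0\}$ (zero loci in $S$); these are lines in $S$ (explicitly $L_1=\{(0,1,z)\}$, $L_2=\{(x,1,-1)\}$, $L_3=\{(1,0,z)\}$, $L_4=\{(1,y,-1)\}$, $L_5=\{(x,1-x,0)\}$). Then for every non-constant morphism $\phi:\mathbb C\to S$ the image $\phi(\mathbb C)$ is contained in one of $L_1,\dots,L_5$; i.e. $L_1,\dots,L_5$ are the only polynomial curves in $S$.
   Context: A polynomial curve in $S$ is the image of a non-constant morphism $\mathbb C\to S$. *)

(* Defs.v *)
(* The base field C is rendered as an arbitrary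
   numClosedFieldType (algebraically closed, characteristic 0). *)
From HB Require Import structures.
From mathcomp Require Import all_boot all_order all_algebra.
Set Implicit Arguments. Unset Strict Implicit. Unset Printing Implicit Defensive.
Import Order.TTheory GRing.Theory Num.Theory.
Local Open Scope ring_scope.

Definition onS (R : numClosedFieldType) (x y z : R) : Prop :=
  x + y + x * y * z = 1.

(* A morphism C -> C^3 is a triple of polynomials (p,q,r); it lands in S. *)
Definition morphism_to_S (R : numClosedFieldType) (p q r : {poly R}) : Prop :=
  forall t : R, onS p.[t] q.[t] r.[t].

Definition nonconstant_map (R : numClosedFieldType) (p q r : {poly R}) : Prop :=
  exists t1 t2 : R, (p.[t1], q.[t1], r.[t1]) <> (p.[t2], q.[t2], r.[t2]).

Definition L1 (R : numClosedFieldType) (x y z : R) : Prop := x = 0.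
Definition L2 (R : numClosedFieldType) (x y z : R) : Prop := y * z + 1 = 0.
Definition L3 (R : numClosedFieldType) (x y z : R) : Prop := y = 0.
Definition L4 (R : numClosedFieldType) (x y z : R) : Prop := x * z + 1 = 0.
Definition L5 (R : numClosedFieldType) (x y z : R) : Prop := z = 0.

Definition image_in (R : numClosedFieldType) (L : R -> R -> R -> Prop)
  (p q r : {poly R}) : Prop :=
  forall t : R, L p.[t] q.[t] r.[t].

(* Main.v *)
Require Import Defs.
From HB Require Import structures.
From mathcomp Require Import all_boot all_order all_algebra.
Local Open Scope ring_scope.
Import Order.TTheory GRing.Theory Num.Theory.
From Stdlib Require Import Lia.

Lemma poly_all_zero (R : numClosedFieldType) (s : {poly R}) :
  (forall t : R, s.[t] = 0) -> s = 0.
Proof.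
move=> H; apply: (@roots_geq_poly_eq0 _ s [seq (i%:R : R) | i <- iota 0 (size s)]).
- by apply/allP => x /mapP [i _ ->]; rewrite /root H.
- rewrite map_inj_uniq ?iota_uniq //.
  by move=> m n /eqP; rewrite eqr_nat => /eqP.
- by rewrite size_map size_iota.
Qed.

Theorem lemma8p10 (R : numClosedFieldType) (p q r : {poly R}) :
  morphism_to_S p q r -> nonconstant_map p q r ->
  image_in (@L1 R) p q r \/ image_in (@L2 R) p q r \/ image_in (@L3 R) p q r \/
  image_in (@L4 R) p q r \/ image_in (@L5 R) p q r.
Proof.
move=> HS Hnc.
have Hid : p + q + p * q * r = 1.
  apply/eqP; rewrite -subr_eq0; apply/eqP; apply: poly_all_zero => t.
  by rewrite !hornerE HS subrr.
have [p0|pn0] := eqVneq p 0.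
  by left => t; rewrite /L1 p0 horner0.
have [q0|qn0] := eqVneq q 0.
  by right; right; left => t; rewrite /L3 q0 horner0.
have [r0|rn0] := eqVneq r 0.
  by right; right; right; right => t; rewrite /L5 r0 horner0.
have E : p * q * r = 1 - (p + q) by rewrite -Hid [p + q + _]addrC addrK.
have Hsz : (size (p * q * r)%R <= maxn (size p) (size q))%N.
  rewrite E; apply: (leq_trans (size_polyD _ _)); rewrite size_polyN size_poly1.
  rewrite geq_max; apply/andP; split; last exact: size_polyD.
  by rewrite leq_max size_poly_gt0 pn0.
rewrite !size_mul ?mulf_neq0 // in Hsz.
have : (size p <= 1)%N /\ (size r <= 1)%N \/ (size q <= 1)%N /\ (size r <= 1)%N.
  move: Hsz; rewrite -!size_poly_gt0 in pn0 qn0 rn0.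
  move: pn0 qn0 rn0; case: (size p) => // a; case: (size q) => // b; case: (size r) => // c _ _ _.
  rewrite !addSn /= addnS /= => H.
  have [ab|ba] := leqP a b.
    rewrite (maxn_idPr _) ?ltnS // in H.
    left; move/ssrnat.leP: H; move/ssrnat.leP: ab => ab H; split; apply/ssrnat.ltP; rewrite -?plusE in H; lia.
  rewrite (maxn_idPl _) ?ltnS ?(ltnW ba) // in H.
  right; move/ssrnat.leP: H; move/ssrnat.ltP: ba => ba H; split; apply/ssrnat.ltP; rewrite -?plusE in H; lia.
case=> [[/size1_polyC hp /size1_polyC hr]|[/size1_polyC hq /size1_polyC hr]].
- set a := p`_0 in hp; set c := r`_0 in hr.
  have [k0|kn0] := eqVneq (a * c + 1) 0.
    by right; right; right; left => t; rewrite /L4 hp hr !hornerC.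
  exfalso; case: Hnc => t1 [t2]; apply.
  have key t : q.[t] * (a * c + 1) = 1 - a.
    have := HS t; rewrite /onS hp hr !hornerC => H.
    rewrite mulrDr mulr1 -H [a + q.[t]]addrC addrAC addrK addrC; congr (_ + _).
    by rewrite mulrCA mulrA.
  have -> : q.[t1] = q.[t2] by apply: (mulIf kn0); rewrite !key.
  by rewrite hp hr !hornerC.
- set b := q`_0 in hq; set c := r`_0 in hr.
  have [k0|kn0] := eqVneq (b * c + 1) 0.
    by right; left => t; rewrite /L2 hq hr !hornerC.
  exfalso; case: Hnc => t1 [t2]; apply.
  have key t : p.[t] * (b * c + 1) = 1 - b.
    have := HS t; rewrite /onS hq hr !hornerC => H.
    by rewrite mulrDr mulr1 -H addrAC addrK mulrA addrC.
  have -> : p.[t1] = p.[t2] by apply: (mulIf kn0); rewrite !key.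
  by rewrite hq hr !hornerC.
Qed.
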